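(* Let $X$ be a quasi-tree with basepoint $x_0$, and let $(T_X,d^* )$ be its end-approximating tree with basepoint $[x_0]$. For every $a>1$ there exists a visual metric $d_{\partial X}$ on $\partial X$ with visual parameter $a$ such that $(\partial X,d_{\partial X})$ is isometric to $(\partial T_X,d_{\partial T_X})$, where $d_{\partial T_X}(p,q)=a^{-(p,q)_{[x_0]}}$ is the standard visual metric on $\partial T_X$ with parameter $a$.
   Context: A quasi-tree is a geodesic metric space quasi-isometric to a simplicial tree. End-approximating tree: with $(x,y)_{x_0}=\frac12(d(x_0,x)+d(x_0,y)-d(x,y))$, let $(x,y)'_{x_0}=\sup\min_{1\leqslant i\leqslant n-1}(x_i,x_{i+1})_{x_0}$, the supremum over all finite sequences $x=x_1,\ldots,x_n=y$ in $X$, and $d'(x,y)=d(x_0,x)+d(x_0,y)-2(x,y)'_{x_0}$; $T_X=X/\sim$ with $x\sim y$ iff $d'(x,y)=0$, and $d^*([x],[y])=d'(x,y)$ (it is an $\mathbb{R}$-tree). For a hyperbolic metric space $Y$ with basepoint $y_0$: a sequence $(x_n)$ converges to infinity if $(x_i,x_j)_{y_0}\to\infty$ as $i,j\to\infty$; two such sequences $(x_n),(y_n)$ are equivalent if $\liminf_{i,j\to\infty}(x_i,y_j)_{y_0}=\infty$; the sequential boundary $\partial Y$ is the set of equivalence classes. For $p,q\in\partial Y$, $(p,q)_{y_0}=\sup\{\liminf_{i,j\to\infty}(x_i,y_j)_{y_0}: (x_i)\in p,\ (y_j)\in q\}$. A metric $d_{\partial Y}$ on $\partial Y$ is a visual metric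 with parameter $a>1$ if there is $K\geqslant 1$ with $\frac1K a^{-(p,q)_{y_0}}\leqslant d_{\partial Y}(p,q)\leqslant K a^{-(p,q)_{y_0}}$ for all $p,q\in\partial Y$. *)

(* Defs.v *)
From Stdlib Require Import Reals Lra List ClassicalEpsilon.
From Coquelicot Require Import Coquelicot.
Open Scope R_scope.
Set Implicit Arguments.

Definition is_metric (X : Type) (d : X -> X -> R) : Prop :=
  (forall x y, 0 <= d x y) /\
  (forall x y, d x y = 0 <-> x = y) /\
  (forall x y, d x y = d y x) /\
  (forall x y z, d x z <= d x y + d y z).

Definition geodesic (X : Type) (d : X -> X -> R) : Prop :=
  forall x y, exists g : R -> X,
    g 0 = x /\ g (d x y) = y /\
    forall s t, 0 <= s <= d x y -> 0 <= t <= d x y ->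
      d (g s) (g t) = Rabs (s - t).

(* is_walk E u l v : u, l_1, ..., l_n is a walk with l_n = v (length n = length l) *)
Fixpoint is_walk (V : Type) (E : V -> V -> Prop) (u : V) (l : list V) (v : V) : Prop :=
  match l with
  | nil => u = v
  | w :: l' => E u w /\ is_walk E w l' v
  end.

Definition is_tree (V : Type) (E : V -> V -> Prop) : Prop :=
  (forall u v, E u v -> E v u) /\
  (forall u, ~ E u u) /\
  (forall u v, exists l, is_walk E u l v) /\
  (forall u l, is_walk E u l u -> (3 <= length l)%nat -> ~ NoDup l).

Definition gdist (V : Type) (E : V -> V -> Prop) (u v : V) (n : nat) : Prop :=
  (exists l, is_walk E u l v /\ length l = n) /\
  (forall l, is_walk E u l v -> (n <= length l)%nat).

Definition quasi_isometric_to_tree (X : Type) (d : X -> X -> R)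
    (V : Type) (E : V -> V -> Prop) : Prop :=
  exists (f : X -> V) (K C : R), 1 <= K /\ 0 <= C /\
    (forall x y n, gdist E (f x) (f y) n ->
        d x y / K - C <= INR n <= K * d x y + C) /\
    (forall v, exists x n, gdist E (f x) v n /\ INR n <= C).

Definition quasi_tree (X : Type) (d : X -> X -> R) : Prop :=
  is_metric d /\ geodesic d /\
  exists (V : Type) (E : V -> V -> Prop), is_tree E /\ quasi_isometric_to_tree d E.

Definition gp (X : Type) (d : X -> X -> R) (x0 x y : X) : R :=
  (d x0 x + d x0 y - d x y) / 2.

Fixpoint chain_min (X : Type) (d : X -> X -> R) (x0 : X) (u : X) (l : list X) (y : X) : R :=
  match l with
  | nil => gp d x0 u y
  | w :: l' => Rmin (gp d x0 u w) (chain_min d x0 w l' y)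
  end.

(* (x,y)'_{x0} : sup over all finite sequences x = x_1, ..., x_n = y
   (this sup is bounded above by d(x0,x), hence finite) *)
Definition gp' (X : Type) (d : X -> X -> R) (x0 x y : X) : R :=
  real (Lub_Rbar (fun r => exists l : list X, r = chain_min d x0 x l y)).

Definition dprime (X : Type) (d : X -> X -> R) (x0 x y : X) : R :=
  d x0 x + d x0 y - 2 * gp' d x0 x y.

(* T_X = X / ~ , x ~ y iff d'(x,y) = 0 ; points are the equivalence classes *)
Definition TX (X : Type) (d : X -> X -> R) (x0 : X) : Type :=
  { P : X -> Prop | exists x, P = (fun y => dprime d x0 x y = 0) }.

Definition TX_class (X : Type) (d : X -> X -> R) (x0 x : X) : TX d x0 :=
  exist _ (fun y => dprime d x0 x y = 0) (ex_intro _ x eq_refl).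

Definition TX_rep (X : Type) (d : X -> X -> R) (x0 : X) (P : TX d x0) : X :=
  proj1_sig (constructive_indefinite_description _ (proj2_sig P)).

Definition dstar (X : Type) (d : X -> X -> R) (x0 : X) (P Q : TX d x0) : R :=
  dprime d x0 (TX_rep P) (TX_rep Q).

Definition dliminf (u : nat -> nat -> R) : Rbar :=
  Rbar_lub (fun t => exists N : nat,
    t = Glb_Rbar (fun r => exists i j, (N <= i)%nat /\ (N <= j)%nat /\ r = u i j)).

Definition conv_inf (Y : Type) (dY : Y -> Y -> R) (y0 : Y) (x : nat -> Y) : Prop :=
  forall M : R, exists N : nat, forall i j, (N <= i)%nat -> (N <= j)%nat ->
    M <= gp dY y0 (x i) (x j).

Definition seq_equiv (Y : Type) (dY : Y -> Y -> R) (y0 : Y) (x y : nat -> Y) : Prop :=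
  dliminf (fun i j => gp dY y0 (x i) (y j)) = p_infty.

Definition bnd (Y : Type) (dY : Y -> Y -> R) (y0 : Y) : Type :=
  { P : (nat -> Y) -> Prop |
      exists x, conv_inf dY y0 x /\
        P = (fun y => conv_inf dY y0 y /\ seq_equiv dY y0 x y) }.

Definition bgp (Y : Type) (dY : Y -> Y -> R) (y0 : Y) (p q : bnd dY y0) : Rbar :=
  Rbar_lub (fun t => exists x y, proj1_sig p x /\ proj1_sig q y /\
    t = dliminf (fun i j => gp dY y0 (x i) (y j))).

(* a^{-t}, with a^{-oo} = 0 (the value at -oo never occurs: products are >= 0) *)
Definition vis (a : R) (t : Rbar) : R :=
  match t with
  | Finite r => Rpower a (- r)
  | p_infty => 0
  | m_infty => 0
  end.

Definition visual_metric (Y : Type) (dY : Y -> Y -> R) (y0 : Y) (a : R)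
    (dB : bnd dY y0 -> bnd dY y0 -> R) : Prop :=
  is_metric dB /\
  exists K : R, 1 <= K /\ forall p q,
    / K * vis a (bgp p q) <= dB p q /\ dB p q <= K * vis a (bgp p q).

Definition dbTX (X : Type) (d : X -> X -> R) (x0 : X) (a : R)
    (p q : bnd (@dstar X d x0) (TX_class d x0 x0)) : R :=
  vis a (bgp p q).

(* Main.v *)
Require Import Defs.
From Stdlib Require Import Reals.
From Coquelicot Require Import Coquelicot.
From Stdlib Require Import ZArith Lra Lia List Classical ClassicalEpsilon FunctionalExtensionality PropExtensionality ProofIrrelevance.
Open Scope R_scope.

Lemma Rbar_lub_ub (E : Rbar -> Prop) x : E x -> Rbar_le x (Rbar_lub E).
Proof. unfold Rbar_lub; destruct (Rbar_ex_lub E) as [l [H1 H2]]; simpl; auto. Qed.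

Lemma Rbar_lub_least (E : Rbar -> Prop) b :
  (forall x, E x -> Rbar_le x b) -> Rbar_le (Rbar_lub E) b.
Proof. unfold Rbar_lub; destruct (Rbar_ex_lub E) as [l [H1 H2]]; simpl; auto. Qed.

Lemma lub_lt (E : Rbar -> Prop) (M : R) :
  Rbar_lt M (Rbar_lub E) -> exists t, E t /\ Rbar_lt M t.
Proof.
  intros H. apply NNPP; intros Hn.
  assert (Rbar_le (Rbar_lub E) M).
  { apply Rbar_lub_least. intros x Ex. apply Rbar_not_lt_le. intros Hl. apply Hn; eauto. }
  eapply Rbar_le_not_lt; eauto.
Qed.

Lemma rbar_le_lt (A B : Rbar) :
  (forall M : R, Rbar_lt M A -> Rbar_le M B) -> Rbar_le A B.
Proof.
  intros H. destruct A as [a| |]; destruct B as [b| |]; simpl in *; auto.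
  - destruct (Rle_dec a b); auto. exfalso. specialize (H ((a+b)/2)). simpl in H.
    assert ((a+b)/2 <= b) by (apply H; lra). lra.
  - apply (H (a-1)); lra.
  - specialize (H (b+1) I); lra.
  - apply (H 0); auto.
Qed.

Lemma glb_lb (E : R -> Prop) x : E x -> Rbar_le (Glb_Rbar E) x.
Proof. intros Ex. destruct (Glb_Rbar_correct E) as [H1 H2]. apply H1; auto. Qed.

Lemma glb_great (E : R -> Prop) (M : R) :
  (forall x, E x -> M <= x) -> Rbar_le M (Glb_Rbar E).
Proof. intros H. destruct (Glb_Rbar_correct E) as [H1 H2]. apply H2. intros x Ex. simpl. auto. Qed.

Lemma dli_ge (u : nat -> nat -> R) (N : nat) (M : R) :
  (forall i j, (N <= i)%nat -> (N <= j)%nat -> M <= u i j) -> Rbar_le M (dliminf u).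
Proof.
  intros H. unfold dliminf. eapply Rbar_le_trans; [| apply Rbar_lub_ub; exists N; reflexivity].
  apply glb_great. intros x (i & j & Hi & Hj & ->). auto.
Qed.

Lemma dli_lt (u : nat -> nat -> R) (M : R) :
  Rbar_lt M (dliminf u) -> exists N, forall i j, (N <= i)%nat -> (N <= j)%nat -> M <= u i j.
Proof.
  intros H. unfold dliminf in H. apply lub_lt in H. destruct H as [t [[N ->] Ht]].
  exists N. intros i j Hi Hj.
  assert (Rbar_le (Glb_Rbar (fun r => exists i j, (N <= i)%nat /\ (N <= j)%nat /\ r = u i j)) (u i j)).
  { apply glb_lb. exists i, j; auto. }
  assert (Rbar_lt M (u i j)) by (eapply Rbar_lt_le_trans; eauto). simpl in *; lra.
Qed.

Definition ev_big (u : nat -> nat -> R) : Prop :=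
  forall M, exists N, forall i j, (N <= i)%nat -> (N <= j)%nat -> M <= u i j.

Lemma dli_inf (u : nat -> nat -> R) : dliminf u = p_infty <-> ev_big u.
Proof.
  split.
  - intros H M. apply dli_lt. rewrite H. simpl; auto.
  - intros H. destruct (dliminf u) as [r| |] eqn:E; auto.
    + destruct (H (r+1)) as [N HN]. pose proof (dli_ge u N (r+1) HN). rewrite E in H0. simpl in H0; lra.
    + destruct (H 0) as [N HN]. pose proof (dli_ge u N 0 HN). rewrite E in H0. simpl in H0; contradiction.
Qed.


Section Walks.
Variable V : Type.
Variable E : V -> V -> Prop.

Lemma walk_app {a l1 b l2 c} :
  is_walk E a l1 b -> is_walk E b l2 c -> is_walk E a (l1 ++ l2) c.
Proof.
  revert a; induction l1 as [|y l1 IH]; intros a H1 H2; simpl in *.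
  - subst; auto.
  - destruct H1; split; [auto|]. eapply IH; eauto.
Qed.

Lemma walk_split {a l1 l2 c} :
  is_walk E a (l1 ++ l2) c -> exists b, is_walk E a l1 b /\ is_walk E b l2 c.
Proof.
  revert a; induction l1 as [|y l1 IH]; intros a H; simpl in *.
  - exists a; auto.
  - destruct H as [H1 H2]. destruct (IH _ H2) as [b [Hb1 Hb2]]. exists b; auto.
Qed.

Lemma walk_last_in {a l b} : is_walk E a l b -> l <> nil -> In b l.
Proof.
  revert a; induction l as [|y l IH]; intros a H Hn; simpl in *.
  - congruence.
  - destruct H as [_ H]. destruct l as [|z l'].
    + simpl in H; auto.
    + right. apply (IH y); auto; discriminate.
Qed.

Lemma nodup_suffix (l1 l2 : list V) : NoDup (l1 ++ l2) -> NoDup l2.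
Proof.
  induction l1; simpl; intros H; auto. inversion H; auto.
Qed.

Lemma nodup_snoc (l : list V) x : NoDup l -> ~ In x l -> NoDup (l ++ x :: nil).
Proof.
  induction l as [|y l IH]; simpl; intros H Hn.
  - constructor; [intros []|constructor].
  - inversion H; subst. constructor.
    + intros Hi. apply in_app_or in Hi. destruct Hi as [Hi|Hi]; auto.
      simpl in Hi. destruct Hi as [Hi|[]]. apply Hn; auto.
    + apply IH; auto.
Qed.

Lemma loop_erase {a m b} :
  is_walk E a m b -> exists m', is_walk E a m' b /\ NoDup (a :: m') /\ incl m' m.
Proof.
  revert a; induction m as [|y m0 IH]; intros a H; simpl in H.
  - exists nil. split; [auto|split]. constructor; [intros []|constructor]. intros x [].
  - destruct H as [Hay Hw]. destruct (IH _ Hw) as [m'' [Hw'' [Hnd Hinc]]].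
    destruct (classic (In a (y :: m''))) as [Hin|Hnin].
    + destruct Hin as [Hy|Hin].
      * subst y. exists m''. repeat split; auto. intros x Hx. right; auto.
      * destruct (in_split _ _ Hin) as [m1 [m2 Heq]]. subst m''.
        destruct (walk_split Hw'') as [c [_ Hc]]. simpl in Hc. destruct Hc as [_ Hc].
        exists m2. repeat split; auto.
        -- apply (nodup_suffix (y :: m1)). simpl. auto.
        -- intros x Hx. right. apply Hinc. apply in_or_app. right. right. auto.
    + exists (y :: m''). repeat split; simpl; auto.
      * constructor; auto.
      * intros x [Hx|Hx]; [left; auto | right; auto].
Qed.

Lemma exists_min (P : nat -> Prop) :
  (exists n, P n) -> exists n, P n /\ forall m, P m -> (n <= m)%nat.
Proof.
  intros [n Hn]. induction n as [n IH] using (well_founded_induction Wf_nat.lt_wf).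
  destruct (classic (exists m, P m /\ (m < n)%nat)) as [[m [Hm Hlt]]|Hno].
  - apply (IH m Hlt Hm).
  - exists n. split; auto. intros m Hm. destruct (Nat.lt_ge_cases m n); auto.
    exfalso; apply Hno; eauto.
Qed.

End Walks.
Arguments walk_app {V E a l1 b l2 c}.
Arguments walk_split {V E a l1 l2 c}.
Arguments walk_last_in {V E a l b}.
Arguments loop_erase {V E a m b}.


Section Tree.
Variable V : Type.
Variable E : V -> V -> Prop.
Hypothesis HT : is_tree E.

Lemma E_sym u v : E u v -> E v u.
Proof. destruct HT as [H _]; auto. Qed.

Lemma E_irr u : ~ E u u.
Proof. destruct HT as [_ [H _]]; auto. Qed.

Lemma walk_rev {a l b} :
  is_walk E a l b -> exists l', is_walk E b l' a /\ length l' = length l /\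
     (forall x, In x l' -> x = a \/ In x l).
Proof.
  revert a; induction l as [|y l IH]; intros a H; simpl in H.
  - subst. exists nil. split; [reflexivity|split; [reflexivity| intros x []]].
  - destruct H as [Hay Hw]. destruct (IH _ Hw) as [l' [Hw' [Hl Hin]]].
    exists (l' ++ a :: nil). repeat split.
    + apply (walk_app (b:=y)); auto. simpl. split; auto. apply E_sym; auto.
    + rewrite length_app; simpl; lia.
    + intros x Hx. apply in_app_or in Hx. destruct Hx as [Hx|[Hx|[]]]; auto.
      destruct (Hin x Hx) as [->|Hx']; right; simpl; auto.
Qed.

Lemma gdist_ex u v : exists n, gdist E u v n.
Proof.
  destruct HT as [_ [_ [Hc _]]].
  destruct (exists_min (fun n => exists l, is_walk E u l v /\ length l = n)) as [n [[l [Hl Hn]] Hmin]].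
  { destruct (Hc u v) as [l Hl]. eauto. }
  exists n. split; [eauto|]. intros l' Hl'. apply Hmin. eauto.
Qed.

Definition dV (u v : V) : nat := proj1_sig (constructive_indefinite_description _ (gdist_ex u v)).

Lemma dV_spec u v : gdist E u v (dV u v).
Proof. unfold dV. destruct (constructive_indefinite_description _ _); simpl; auto. Qed.

Lemma dV_walk {u l v} : is_walk E u l v -> (dV u v <= length l)%nat.
Proof. intros H. apply (proj2 (dV_spec u v)); auto. Qed.

Lemma dV_ex u v : exists l, is_walk E u l v /\ length l = dV u v.
Proof. apply (proj1 (dV_spec u v)). Qed.

Lemma dV_tri u v w : (dV u w <= dV u v + dV v w)%nat.
Proof.
  destruct (dV_ex u v) as [l1 [H1 L1]]. destruct (dV_ex v w) as [l2 [H2 L2]].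
  pose proof (dV_walk (walk_app H1 H2)). rewrite length_app in H. lia.
Qed.

Lemma dV_sym u v : dV u v = dV v u.
Proof.
  assert (forall u v, (dV u v <= dV v u)%nat).
  { intros a b. destruct (dV_ex b a) as [l [H L]]. destruct (walk_rev H) as [l' [H' [L' _]]].
    pose proof (dV_walk H'). lia. }
  pose proof (H u v); pose proof (H v u); lia.
Qed.

Lemma dV_refl u : dV u u = 0%nat.
Proof. pose proof (@dV_walk u nil u eq_refl). simpl in H; lia. Qed.

Lemma dV_zero u v : dV u v = 0%nat -> u = v.
Proof.
  intros H. destruct (dV_ex u v) as [l [Hl L]]. destruct l; simpl in *; auto. lia.
Qed.

Lemma dV_in_walk {u l b x} : is_walk E u l b -> In x l -> (dV u x <= length l)%nat.
Proof.
  intros Hw Hin. destruct (in_split _ _ Hin) as [l1 [l2 ->]].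
  destruct (walk_split Hw) as [c [Hc1 Hc2]]. simpl in Hc2. destruct Hc2 as [Hcx _].
  assert (is_walk E u (l1 ++ x :: nil) x) by (apply (walk_app (b:=c)); simpl; auto).
  pose proof (dV_walk H). rewrite !length_app in *. simpl in *. lia.
Qed.

Lemma dV_at Z A k : (k <= dV Z A)%nat -> exists c, dV Z c = k /\ dV c A = (dV Z A - k)%nat.
Proof.
  intros Hk. destruct (dV_ex Z A) as [l [Hl L]].
  rewrite <- (firstn_skipn k l) in Hl.
  destruct (walk_split Hl) as [c [H1 H2]].
  pose proof (dV_walk H1). pose proof (dV_walk H2).
  rewrite length_firstn in H. rewrite length_skipn in H0.
  pose proof (dV_tri Z c A). exists c. lia.
Qed.

Theorem tree_cut u w v q :
  (dV u w + dV w v = dV u v)%nat -> is_walk E u q v -> w = u \/ In w q.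
Proof.
  intros Hd Hq. apply NNPP. intros Hn.
  assert (Hwu : w <> u) by (intros ->; apply Hn; auto).
  assert (Hwq : ~ In w q) by (intros ?; apply Hn; auto).
  clear Hn.
  assert (Ha : (1 <= dV u w)%nat).
  { destruct (dV u w) eqn:Eq; [|lia]. apply dV_zero in Eq. congruence. }
  assert (Hb : (1 <= dV w v)%nat).
  { destruct (dV w v) eqn:Eq; [|lia]. apply dV_zero in Eq. subst v.
    destruct q. simpl in Hq. congruence. exfalso; apply Hwq. apply (walk_last_in Hq). discriminate. }
  destruct (dV_ex u w) as [l1 [H1 L1]].
  destruct (dV_ex w v) as [l2 [H2 L2]].
  destruct l1 as [|y0 l1r] using rev_ind; [simpl in L1; lia|]. clear IHl1r.
  destruct (walk_split H1) as [p [Hp1 Hp2]]. simpl in Hp2. destruct Hp2 as [Hpy Hyw]. subst y0.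
  rewrite length_app in L1; simpl in L1.
  destruct l2 as [|s l2r]; [simpl in L2; lia|]. simpl in H2. destruct H2 as [Hws Hs2]. simpl in L2.
  assert (Hps : p <> s).
  { intros ->. pose proof (dV_walk (walk_app Hp1 Hs2)). rewrite length_app in H. lia. }
  assert (Hw1 : ~ In w l1r).
  { intros Hi. pose proof (dV_in_walk Hp1 Hi). lia. }
  assert (Hw2 : ~ In w l2r).
  { intros Hi. destruct (in_split _ _ Hi) as [m1 [m2 ->]].
    destruct (walk_split Hs2) as [c [_ Hc]]. simpl in Hc. destruct Hc as [_ Hc].
    pose proof (dV_walk Hc). rewrite length_app in L2. simpl in L2. lia. }
  assert (Hsw : s <> w) by (intros ->; eapply E_irr; eauto).
  assert (Hpw : p <> w) by (intros ->; eapply E_irr; eauto).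
  destruct (walk_rev Hp1) as [r1 [Hr1 [_ Hr1in]]].
  destruct (walk_rev Hs2) as [r2 [Hr2 [_ Hr2in]]].
  pose proof (walk_app Hr1 (walk_app Hq Hr2)) as Hm.
  destruct (loop_erase Hm) as [m' [Hm' [Hnd Hinc]]].
  assert (Hwm : ~ In w m').
  { intros Hi. apply Hinc in Hi. apply in_app_or in Hi. destruct Hi as [Hi|Hi].
    - destruct (Hr1in _ Hi); auto.
    - apply in_app_or in Hi. destruct Hi as [Hi|Hi]; auto. destruct (Hr2in _ Hi); auto. }
  assert (Hm'n : m' <> nil) by (intros ->; simpl in Hm'; auto).
  destruct HT as [_ [_ [_ Hcyc]]].
  apply (Hcyc w (p :: m' ++ w :: nil)).
  - simpl. split; [apply E_sym; auto|]. apply (walk_app (b:=s)); auto. simpl. split; auto. apply E_sym; auto.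
  - simpl. rewrite length_app. simpl. destruct m'; [congruence|]. simpl. lia.
  - change (NoDup ((p :: m') ++ w :: nil)). apply nodup_snoc; auto.
    simpl. intros [Hi|Hi]; auto.
Qed.

Theorem tree_pinch Z A B (W : list V) (k : nat) :
  (k < dV Z A)%nat -> is_walk E A W B -> (forall v, v = A \/ In v W -> (k < dV Z v)%nat) ->
  exists c, dV Z c = k /\
    (forall l, is_walk E A l Z -> c = A \/ In c l) /\
    (forall l, is_walk E Z l B -> c = Z \/ In c l).
Proof.
  intros Hk HW Hfar. destruct (dV_at Z A k) as [c [Hc1 Hc2]]; [lia|].
  assert (Hcut : forall l, is_walk E A l Z -> c = A \/ In c l).
  { intros l Hl. apply tree_cut with Z; auto. rewrite (dV_sym A c), (dV_sym A Z), (dV_sym c Z). lia. }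
  exists c. split; auto. split; auto.
  intros l Hl. apply NNPP. intros Hn.
  destruct (walk_rev Hl) as [r [Hr [_ Hrin]]].
  destruct (Hcut _ (walk_app HW Hr)) as [HcA|Hin].
  - subst c. specialize (Hfar A (or_introl eq_refl)). lia.
  - apply in_app_or in Hin. destruct Hin as [Hin|Hin].
    + specialize (Hfar c (or_intror Hin)). lia.
    + destruct (Hrin _ Hin) as [->|Hi]; apply Hn; auto.
Qed.

End Tree.
Arguments walk_rev {V E} HT {a l b}.
Arguments dV {V E} HT u v.
Arguments dV_ex {V E} HT u v.
Arguments dV_sym {V E} HT u v.
Arguments dV_refl {V E} HT u.
Arguments dV_tri {V E} HT u v w.
Arguments dV_zero {V E} HT u v.
Arguments dV_spec {V E} HT u v.
Arguments dV_at {V E} HT Z A k.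
Arguments tree_cut {V E} HT u w v q.
Arguments tree_pinch {V E} HT Z A B W k.
Arguments E_sym {V E} HT u v.
Arguments E_irr {V E} HT u.
Arguments dV_walk {V E} HT {u l v}.
Arguments dV_in_walk {V E} HT {u l b x}.




Section QT.
Variable X : Type.
Variable d : X -> X -> R.
Hypothesis Hm : is_metric d.
Variable V : Type.
Variable E : V -> V -> Prop.
Hypothesis HT : is_tree E.
Variable f : X -> V.
Variables K C : R.
Hypothesis HK : 1 <= K.
Hypothesis HC : 0 <= C.
Hypothesis HQI : forall x y n, gdist E (f x) (f y) n -> d x y / K - C <= INR n <= K * d x y + C.

Lemma d_nn x y : 0 <= d x y. Proof. destruct Hm as [H _]; auto. Qed.
Lemma d_sym x y : d x y = d y x. Proof. destruct Hm as [_ [_ [H _]]]; auto. Qed.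
Lemma d_tri x y z : d x z <= d x y + d y z. Proof. destruct Hm as [_ [_ [_ H]]]; auto. Qed.
Lemma d_refl x : d x x = 0. Proof. destruct Hm as [_ [H _]]. apply H; auto. Qed.

Notation DV := (dV HT).

Lemma qi_lo x y : d x y / K - C <= INR (DV (f x) (f y)).
Proof. apply (HQI x y), dV_spec. Qed.
Lemma qi_hi x y : INR (DV (f x) (f y)) <= K * d x y + C.
Proof. apply (HQI x y), dV_spec. Qed.

Definition J0 := K + C.

Definition near (S : X -> Prop) (v : V) := exists p, S p /\ INR (DV v (f p)) <= J0.

Lemma near_mono (S S' : X -> Prop) v : (forall p, S p -> S' p) -> near S v -> near S' v.
Proof. intros H [p [Hp Hd]]. exists p; auto. Qed.

Lemma near_self (S : X -> Prop) p : S p -> near S (f p).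
Proof. intros Hp. exists p. split; auto. rewrite dV_refl. simpl. unfold J0; lra. Qed.

Lemma chain_walk (q : nat -> X) (S : X -> Prop) N :
  (forall j, (j <= N)%nat -> S (q j)) -> (forall j, (j < N)%nat -> d (q j) (q (Datatypes.S j)) <= 1) ->
  exists W, is_walk E (f (q 0%nat)) W (f (q N)) /\ forall v, In v W -> near S v.
Proof.
  induction N as [|N IH]; intros HS Hd.
  - exists nil. split; [reflexivity|]. intros v [].
  - destruct IH as [W [HW Hn]]; [intros; apply HS; lia| intros; apply Hd; lia|].
    destruct (dV_ex HT (f (q N)) (f (q (Datatypes.S N)))) as [l [Hl Ll]].
    exists (W ++ l). split; [eapply walk_app; eauto|].
    intros v Hv. apply in_app_or in Hv. destruct Hv as [Hv|Hv]; auto.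
    exists (q N). split; [apply HS; lia|].
    pose proof (dV_in_walk HT Hl Hv). rewrite dV_sym in H.
    pose proof (qi_hi (q N) (q (Datatypes.S N))). rewrite Ll in H.
    pose proof (Hd N (Nat.lt_succ_diag_r N)). apply le_INR in H.
    unfold J0. assert (K * d (q N) (q (Datatypes.S N)) <= K * 1) by (apply Rmult_le_compat_l; lra). lra.
Qed.

Definition geod (g : R -> X) x y :=
  g 0 = x /\ g (d x y) = y /\
  forall s t, 0 <= s <= d x y -> 0 <= t <= d x y -> d (g s) (g t) = Rabs (s - t).

Lemma between_lemma t1 t2 lam : 0 <= lam <= 1 ->
  Rmin t1 t2 <= t1 + lam * (t2 - t1) <= Rmax t1 t2.
Proof.
  intros Hl. destruct (Rle_dec t1 t2).
  - rewrite Rmin_left, Rmax_right by lra. split; nra.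
  - rewrite Rmin_right, Rmax_left by lra. split; nra.
Qed.

Lemma seg_walk g x y (S : X -> Prop) t1 t2 :
  geod g x y -> 0 <= t1 <= d x y -> 0 <= t2 <= d x y ->
  (forall t, Rmin t1 t2 <= t <= Rmax t1 t2 -> S (g t)) ->
  exists W, is_walk E (f (g t1)) W (f (g t2)) /\ forall v, In v W -> near S v.
Proof.
  intros [G0 [GL Giso]] H1 H2 HS.
  destruct (INR_unbounded (Rabs (t2 - t1))) as [N HN].
  assert (HN0 : 0 < INR N) by (pose proof (Rabs_pos (t2 - t1)); lra).
  set (tau := fun j : nat => t1 + (INR j / INR N) * (t2 - t1)).
  assert (Htau : forall j, (j <= N)%nat -> Rmin t1 t2 <= tau j <= Rmax t1 t2).
  { intros j Hj. apply between_lemma. split.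
    - apply Rmult_le_pos; [apply pos_INR| left; apply Rinv_0_lt_compat; auto].
    - apply le_INR in Hj. unfold Rdiv. apply (Rmult_le_reg_r (INR N)); auto.
      rewrite Rmult_assoc, Rinv_l by lra. lra. }
  assert (Hrange : forall t, Rmin t1 t2 <= t <= Rmax t1 t2 -> 0 <= t <= d x y).
  { intros t Ht. destruct (Rle_dec t1 t2).
    - rewrite Rmin_left, Rmax_right in Ht by lra. lra.
    - rewrite Rmin_right, Rmax_left in Ht by lra. lra. }
  destruct (chain_walk (fun j => g (tau j)) S N) as [W [HW Hn]].
  - intros j Hj. apply HS. auto.
  - intros j Hj. rewrite Giso; try (apply Hrange, Htau; lia).
    unfold tau. rewrite S_INR.
    replace (t1 + INR j / INR N * (t2 - t1) - (t1 + (INR j + 1) / INR N * (t2 - t1)))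
      with (- ((t2 - t1) / INR N)) by (field; lra).
    rewrite Rabs_Ropp. unfold Rdiv. rewrite Rabs_mult, Rabs_inv, (Rabs_right (INR N)) by lra.
    apply (Rmult_le_reg_r (INR N)); auto. rewrite Rmult_assoc, Rinv_l by lra. lra.
  - exists W. split; auto.
    unfold tau in HW. simpl in HW. replace (t1 + 0 / INR N * (t2 - t1)) with t1 in HW by (field; lra).
    replace (t1 + INR N / INR N * (t2 - t1)) with t2 in HW by (field; lra). auto.
Qed.

Lemma geod_point x0 g x y t : geod g x y -> 0 <= t <= d x y -> gp d x0 x y <= d x0 (g t).
Proof.
  intros [G0 [GL Giso]] Ht. unfold gp.
  pose proof (d_tri x0 (g t) x). pose proof (d_tri x0 (g t) y).
  assert (A1: d (g t) (g 0) = Rabs (t - 0)) by (apply Giso; lra). rewrite G0 in A1.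
  assert (A2: d (g t) (g (d x y)) = Rabs (t - d x y)) by (apply Giso; lra). rewrite GL in A2.
  rewrite Rabs_right in A1 by lra. rewrite Rabs_left1 in A2 by lra. lra.
Qed.

Definition MM := K * (2 * J0 + C).
Definition Delta := K * (K * MM + 2 * C + 2 * J0 + 2).

Lemma J0_nn : 0 <= J0. Proof. unfold J0; lra. Qed.
Lemma MM_nn : 0 <= MM. Proof. unfold MM, J0. nra. Qed.
Lemma Delta_nn : 0 <= Delta.
Proof. unfold Delta. pose proof MM_nn. pose proof J0_nn. nra. Qed.

Lemma INR_dV_tri u v w : INR (DV u w) <= INR (DV u v) + INR (DV v w).
Proof. rewrite <- plus_INR. apply le_INR. apply dV_tri. Qed.

Theorem bottleneck (S : X -> Prop) x y g :
  S x -> S y -> geod g x y ->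
  (exists W, is_walk E (f x) W (f y) /\ forall v, In v W -> near S v) ->
  forall s, 0 <= s <= d x y -> exists p, S p /\ d (g s) p <= Delta.
Proof.
  intros Sx Sy Hg [W [HW HWn]] s Hs.
  apply NNPP. intros Hno.
  assert (Hfar : forall p, S p -> Delta < d (g s) p).
  { intros p Sp. apply Rnot_le_lt. intros Hle. apply Hno. eauto. }
  clear Hno.
  pose proof Hg as [G0 [GL Giso]].
  set (z := g s).
  assert (Hs1 : Delta < s).
  { specialize (Hfar x Sx). rewrite <- G0 in Hfar. unfold z in *. rewrite Giso in Hfar by lra.
    rewrite Rabs_right in Hfar by lra. lra. }
  assert (Hs2 : s + Delta < d x y).
  { specialize (Hfar y Sy). rewrite <- GL in Hfar. rewrite Giso in Hfar by lra.
    rewrite Rabs_left1 in Hfar by lra. lra. }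
  pose proof Delta_nn as HD.
  set (S1 := fun p => Delta <= d z p).
  assert (Pa : forall t, Rmin (s - Delta) 0 <= t <= Rmax (s - Delta) 0 -> S1 (g t)).
  { intros t Ht. rewrite Rmin_right, Rmax_left in Ht by lra. unfold S1, z.
    rewrite Giso by lra. rewrite Rabs_right by lra. lra. }
  destruct (seg_walk g x y S1 (s - Delta) 0 Hg ltac:(lra) ltac:(lra) Pa) as [Wa [HWa HWan]].
  assert (Pb : forall t, Rmin (d x y) (s + Delta) <= t <= Rmax (d x y) (s + Delta) -> S1 (g t)).
  { intros t Ht. rewrite Rmin_right, Rmax_left in Ht by lra. unfold S1, z.
    rewrite Giso by lra. rewrite Rabs_left1 by lra. lra. }
  destruct (seg_walk g x y S1 (d x y) (s + Delta) Hg ltac:(lra) ltac:(lra) Pb) as [Wb [HWb HWbn]].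
  rewrite G0 in HWa. rewrite GL in HWb.
  pose proof (walk_app HWa (walk_app HW HWb)) as HWt.
  assert (HWtn : forall v, v = f (g (s - Delta)) \/ In v (Wa ++ W ++ Wb) -> near S1 v).
  { intros v [->|Hv].
    - apply near_self. unfold S1, z. rewrite Giso by lra. rewrite Rabs_right by lra. lra.
    - apply in_app_or in Hv. destruct Hv as [Hv|Hv]; auto.
      apply in_app_or in Hv. destruct Hv as [Hv|Hv]; auto.
      apply (near_mono S); auto. intros p Sp. unfold S1. left. apply Hfar; auto. }
  set (rho := K * MM + C + J0 + 2).
  assert (HDK : Delta / K = K * MM + 2 * C + 2 * J0 + 2) by (unfold Delta; field; lra).
  assert (Hfar1 : forall v, near S1 v -> rho <= INR (DV (f z) v)).
  { intros v [p [Sp Hp]]. unfold S1 in Sp.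
    pose proof (qi_lo z p). pose proof (INR_dV_tri (f z) v (f p)).
    assert (Delta / K <= d z p / K) by (unfold Rdiv; apply Rmult_le_compat_r; [left; apply Rinv_0_lt_compat; lra| lra]).
    unfold rho. lra. }
  pose proof MM_nn. pose proof J0_nn.
  assert (HKM : 0 <= K * MM) by nra.
  set (k := Z.to_nat (Int_part (rho - 1))).
  assert (Hk : INR k <= rho - 1 /\ rho - 2 < INR k).
  { destruct (base_Int_part (rho - 1)) as [B1 B2].
    assert (0 <= IZR (Int_part (rho - 1))) by (unfold rho in *; lra).
    assert (Hz : (0 <= Int_part (rho - 1))%Z) by (apply le_IZR; auto).
    unfold k. rewrite INR_IZR_INZ, Z2Nat.id by auto. lra. }
  destruct (tree_pinch HT (f z) (f (g (s - Delta))) (f (g (s + Delta))) (Wa ++ W ++ Wb) k) as [c [Hc [HcA HcB]]]; auto.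
  - apply INR_lt. pose proof (qi_lo z (g (s - Delta))). unfold z in H1 at 1.
    rewrite Giso in H1 by lra. rewrite Rabs_right in H1 by lra.
    replace (s - (s - Delta)) with Delta in H1 by ring. unfold rho in *. lra.
  - intros v Hv. apply INR_lt. pose proof (Hfar1 v (HWtn v Hv)). lra.
  - assert (P1 : forall t, Rmin (s - Delta) s <= t <= Rmax (s - Delta) s -> (fun p => exists t, s - Delta <= t <= s /\ p = g t) (g t)).
    { intros t Ht. rewrite Rmin_left, Rmax_right in Ht by lra. eauto. }
    destruct (seg_walk g x y _ (s - Delta) s Hg ltac:(lra) ltac:(lra) P1) as [W1 [HW1 HW1n]].
    assert (P2 : forall t, Rmin s (s + Delta) <= t <= Rmax s (s + Delta) -> (fun p => exists t, s <= t <= s + Delta /\ p = g t) (g t)).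
    { intros t Ht. rewrite Rmin_left, Rmax_right in Ht by lra. eauto. }
    destruct (seg_walk g x y _ s (s + Delta) Hg ltac:(lra) ltac:(lra) P2) as [W2 [HW2 HW2n]].
    assert (Hn1 : near (fun p => exists t, s - Delta <= t <= s /\ p = g t) c).
    { destruct (HcA W1 HW1) as [->|Hi]; auto. apply near_self. exists (s - Delta). split; auto; lra. }
    assert (Hn2 : near (fun p => exists t, s <= t <= s + Delta /\ p = g t) c).
    { destruct (HcB W2 HW2) as [->|Hi]; auto. apply near_self. exists s. split; auto; lra. }
    destruct Hn1 as [p1 [[t1 [Ht1 ->]] Hp1]].
    destruct Hn2 as [p2 [[t2 [Ht2 ->]] Hp2]].
    assert (H12 : t2 - t1 <= MM).
    { pose proof (qi_lo (g t1) (g t2)). rewrite Giso in H1 by lra. rewrite Rabs_left1 in H1 by lra.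
      pose proof (INR_dV_tri (f (g t1)) c (f (g t2))). rewrite dV_sym in Hp1.
      assert ((t2 - t1) / K <= 2 * J0 + C) by lra.
      unfold MM. replace (t2 - t1) with (K * ((t2 - t1) / K)) by (field; lra).
      apply Rmult_le_compat_l; lra. }
    pose proof (qi_hi z (g t1)).
    assert (Hzt : d z (g t1) = s - t1) by (unfold z; rewrite Giso by lra; rewrite Rabs_right by lra; ring).
    rewrite Hzt in H1.
    pose proof (INR_dV_tri (f z) (f (g t1)) c). rewrite Hc in H2. rewrite dV_sym in Hp1.
    assert (K * (s - t1) <= K * MM) by (apply Rmult_le_compat_l; lra).
    unfold rho in Hk. lra.
Qed.


Lemma gp_le_l x0 x y : gp d x0 x y <= d x0 x.
Proof. unfold gp. pose proof (d_tri x0 x y). lra. Qed.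
Lemma gp_le_r x0 x y : gp d x0 x y <= d x0 y.
Proof. unfold gp. pose proof (d_tri x0 y x). rewrite (d_sym y x) in H. lra. Qed.
Lemma gp_sym x0 x y : gp d x0 x y = gp d x0 y x.
Proof. unfold gp. rewrite (d_sym x y). lra. Qed.
Lemma gp_nn x0 x y : 0 <= gp d x0 x y.
Proof. unfold gp. pose proof (d_tri x x0 y). rewrite (d_sym x x0) in H. lra. Qed.

Lemma geod_dl g x y t : geod g x y -> 0 <= t <= d x y -> d x (g t) = t.
Proof.
  intros [G0 [GL Giso]] Ht. assert (A : d (g 0) (g t) = Rabs (0 - t)) by (apply Giso; lra).
  rewrite G0 in A. rewrite A. rewrite Rabs_left1 by lra. ring.
Qed.
Lemma geod_dr g x y t : geod g x y -> 0 <= t <= d x y -> d (g t) y = d x y - t.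
Proof.
  intros [G0 [GL Giso]] Ht. assert (A : d (g t) (g (d x y)) = Rabs (t - d x y)) by (apply Giso; lra).
  rewrite GL in A. rewrite A. rewrite Rabs_left1 by lra. ring.
Qed.

Hypothesis Hgeo : geodesic d.

Lemma tripod x0 x y g : geod g x y ->
  d x0 (g ((d x y + d x x0 - d y x0) / 2)) <= gp d x0 x y + 2 * Delta.
Proof.
  intros Hg. pose proof Hg as [G0 [GL Giso]].
  set (al := (d x y + d x x0 - d y x0) / 2).
  assert (Hal : 0 <= al <= d x y).
  { unfold al. pose proof (d_tri x x0 y). pose proof (d_tri y x x0). pose proof (d_tri x y x0).
    rewrite (d_sym y x) in H0. rewrite (d_sym x0 y) in H. lra. }
  destruct (Hgeo x x0) as [g1 Hg1]. destruct (Hgeo x0 y) as [g2 Hg2].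
  pose proof Hg1 as [G10 [G1L G1iso]]. pose proof Hg2 as [G20 [G2L G2iso]].
  set (S := fun p => (exists t, 0 <= t <= d x x0 /\ p = g1 t) \/ (exists t, 0 <= t <= d x0 y /\ p = g2 t)).
  assert (P1 : forall t, Rmin 0 (d x x0) <= t <= Rmax 0 (d x x0) -> S (g1 t)).
  { intros t Ht. rewrite Rmin_left, Rmax_right in Ht by apply d_nn. left; eauto. }
  destruct (seg_walk g1 x x0 S 0 (d x x0) Hg1 ltac:(pose proof (d_nn x x0); lra) ltac:(pose proof (d_nn x x0); lra) P1) as [W1 [HW1 _HW1]].
  assert (P2 : forall t, Rmin 0 (d x0 y) <= t <= Rmax 0 (d x0 y) -> S (g2 t)).
  { intros t Ht. rewrite Rmin_left, Rmax_right in Ht by apply d_nn. right; eauto. }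
  destruct (seg_walk g2 x0 y S 0 (d x0 y) Hg2 ltac:(pose proof (d_nn x0 y); lra) ltac:(pose proof (d_nn x0 y); lra) P2) as [W2 [HW2 _HW2]].
  rewrite G10, G1L in HW1. rewrite G20, G2L in HW2.
  assert (Sx : S x) by (left; exists 0; split; [pose proof (d_nn x x0); lra| auto]).
  assert (Sy : S y) by (right; exists (d x0 y); split; [pose proof (d_nn x0 y); lra| auto]).
  destruct (bottleneck S x y g Sx Sy Hg) with (s := al) as [p [Sp Hp]]; auto.
  { exists (W1 ++ W2). split; [eapply walk_app; eauto|].
    intros v Hv. apply in_app_or in Hv; destruct Hv; auto. }
  pose proof Delta_nn.
  pose proof (geod_dl g x y al Hg Hal) as Hxz. pose proof (geod_dr g x y al Hg Hal) as Hzy.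
  unfold gp. destruct Sp as [[t [Ht ->]]|[t [Ht ->]]].
  - pose proof (geod_dl g1 x x0 t Hg1 Ht) as A1. pose proof (geod_dr g1 x x0 t Hg1 Ht) as A2.
    pose proof (d_tri x (g1 t) (g al)). pose proof (d_tri x0 (g1 t) (g al)).
    pose proof (d_sym x0 (g1 t)). pose proof (d_sym (g1 t) (g al)). pose proof (d_sym x0 x). pose proof (d_sym y x0).
    unfold al in *. lra.
  - pose proof (geod_dl g2 x0 y t Hg2 Ht) as A1. pose proof (geod_dr g2 x0 y t Hg2 Ht) as A2.
    pose proof (d_tri (g al) (g2 t) y). pose proof (d_tri x0 (g2 t) (g al)).
    pose proof (d_sym (g2 t) (g al)). pose proof (d_sym x0 x). pose proof (d_sym y x0).
    unfold al in *. lra.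
Qed.

Lemma chain_lemma x0 : forall l x y t, t <= chain_min d x0 x l y ->
  t <= d x0 x /\ t <= d x0 y /\
  exists W, is_walk E (f x) W (f y) /\ forall v, In v W -> near (fun p => t <= d x0 p) v.
Proof.
  assert (Hseg : forall x y t, t <= gp d x0 x y -> exists W, is_walk E (f x) W (f y) /\ forall v, In v W -> near (fun p => t <= d x0 p) v).
  { intros x y t Ht. destruct (Hgeo x y) as [g Hg]. pose proof Hg as [G0 [GL Giso]].
    assert (P : forall s, Rmin 0 (d x y) <= s <= Rmax 0 (d x y) -> (fun p => t <= d x0 p) (g s)).
    { intros s Hs. rewrite Rmin_left, Rmax_right in Hs by apply d_nn. simpl.
      pose proof (geod_point x0 g x y s Hg Hs). lra. }
    destruct (seg_walk g x y _ 0 (d x y) Hg ltac:(pose proof (d_nn x y); lra) ltac:(pose proof (d_nn x y); lra) P) as [W [HW HWn]].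
    rewrite G0, GL in HW. eauto. }
  induction l as [|w l IH]; intros x y t Ht; simpl in Ht.
  - pose proof (gp_le_l x0 x y). pose proof (gp_le_r x0 x y). split; [lra|split; [lra|]]. auto.
  - assert (H1 : t <= gp d x0 x w) by (eapply Rle_trans; [apply Ht| apply Rmin_l]).
    assert (H2 : t <= chain_min d x0 w l y) by (eapply Rle_trans; [apply Ht| apply Rmin_r]).
    destruct (IH w y t H2) as [Hw [Hy [W2 [HW2 HW2n]]]].
    destruct (Hseg x w t H1) as [W1 [HW1 HW1n]].
    pose proof (gp_le_l x0 x w).
    split; [lra|split; [lra|]]. exists (W1 ++ W2). split; [eapply walk_app; eauto|].
    intros v Hv. apply in_app_or in Hv; destruct Hv; auto.
Qed.

Theorem chain_bound x0 x l y : chain_min d x0 x l y <= gp d x0 x y + 3 * Delta.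
Proof.
  set (t := chain_min d x0 x l y).
  destruct (chain_lemma x0 l x y t (Rle_refl _)) as [Hx [Hy HW]].
  destruct (Hgeo x y) as [g Hg].
  set (al := (d x y + d x x0 - d y x0) / 2).
  assert (Hal : 0 <= al <= d x y).
  { unfold al. pose proof (d_tri x x0 y). pose proof (d_tri y x x0). pose proof (d_tri x y x0).
    rewrite (d_sym y x) in H0. rewrite (d_sym x0 y) in H. lra. }
  destruct (bottleneck (fun p => t <= d x0 p) x y g Hx Hy Hg HW al Hal) as [p [Hp Hpd]].
  pose proof (tripod x0 x y g Hg). fold al in H.
  pose proof (d_tri x0 (g al) p). lra.
Qed.

End QT.


Section GP.
Variable X : Type.
Variable d : X -> X -> R.
Hypothesis Hm : is_metric d.
Variable x0 : X.

Let dsym := d_sym X d Hm.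
Let dtri := d_tri X d Hm.
Let drefl := d_refl X d Hm.
Let dnn := d_nn X d Hm.

Lemma gpl x y : gp d x0 x y <= d x0 x.
Proof. unfold gp. pose proof (dtri x0 x y). lra. Qed.
Lemma gpr x y : gp d x0 x y <= d x0 y.
Proof. unfold gp. pose proof (dtri x0 y x). rewrite (dsym y x) in H. lra. Qed.
Lemma gps x y : gp d x0 x y = gp d x0 y x.
Proof. unfold gp. rewrite (dsym x y). lra. Qed.
Lemma gpnn x y : 0 <= gp d x0 x y.
Proof. unfold gp. pose proof (dtri x x0 y). rewrite (dsym x x0) in H. lra. Qed.

Notation cm := (chain_min d x0).

Lemma chain_app x l1 w l2 y : cm x (l1 ++ w :: l2) y = Rmin (cm x l1 w) (cm w l2 y).
Proof.
  revert x; induction l1 as [|a l1 IH]; intros x; simpl; auto.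
  rewrite IH. rewrite Rmin_assoc. reflexivity.
Qed.

Lemma chain_rev x l y : cm x l y = cm y (rev l) x.
Proof.
  revert x y; induction l as [|w l IH]; intros x y; simpl.
  - apply gps.
  - rewrite chain_app. rewrite <- IH. simpl. rewrite Rmin_comm. rewrite (gps w x). reflexivity.
Qed.

Lemma chain_le_l x l y : cm x l y <= d x0 x.
Proof. destruct l; simpl. apply gpl. eapply Rle_trans; [apply Rmin_l| apply gpl]. Qed.

Lemma chain_le_r x l y : cm x l y <= d x0 y.
Proof. rewrite chain_rev. apply chain_le_l. Qed.

Definition Ech x y := fun r => exists l, r = cm x l y.

Lemma G_lub x y : Lub_Rbar (Ech x y) = Finite (gp' d x0 x y) /\ is_lub_Rbar (Ech x y) (gp' d x0 x y).
Proof.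
  pose proof (Lub_Rbar_correct (Ech x y)) as [H1 H2].
  unfold gp'. fold (Ech x y).
  assert (A : Rbar_le (Lub_Rbar (Ech x y)) (d x0 x)).
  { apply H2. intros r [l ->]. simpl. apply chain_le_l. }
  assert (B : Rbar_le (gp d x0 x y) (Lub_Rbar (Ech x y))).
  { apply H1. exists nil. reflexivity. }
  destruct (Lub_Rbar (Ech x y)) eqn:Eq; simpl in *; try contradiction.
  split; auto. split; auto.
Qed.

Notation G := (gp' d x0).

Lemma G_ge_chain x l y : cm x l y <= G x y.
Proof. destruct (G_lub x y) as [_ [H _]]. apply (H (cm x l y)). exists l; auto. Qed.

Lemma G_le x y B : (forall l, cm x l y <= B) -> G x y <= B.
Proof.
  intros Hb. destruct (G_lub x y) as [_ [_ H]]. apply (H B). intros r [l ->]. simpl. auto.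
Qed.

Lemma G_ge_gp x y : gp d x0 x y <= G x y.
Proof. apply (G_ge_chain x nil y). Qed.
Lemma G_le_l x y : G x y <= d x0 x.
Proof. apply G_le. intros; apply chain_le_l. Qed.
Lemma G_le_r x y : G x y <= d x0 y.
Proof. apply G_le. intros; apply chain_le_r. Qed.

Lemma G_sym x y : G x y = G y x.
Proof.
  assert (forall x y, G x y <= G y x).
  { intros a b. apply G_le. intros l. rewrite chain_rev. apply G_ge_chain. }
  pose proof (H x y); pose proof (H y x); lra.
Qed.

Lemma G_ultra x y z : Rmin (G x y) (G y z) <= G x z.
Proof.
  apply Rnot_lt_le. intros Hlt.
  assert (E1 : exists l1, G x z < cm x l1 y).
  { apply NNPP. intros Hn. assert (G x y <= G x z).
    { apply G_le. intros l. apply Rnot_lt_le. intros Hl. apply Hn; eauto. }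
    pose proof (Rmin_l (G x y) (G y z)). lra. }
  assert (E2 : exists l2, G x z < cm y l2 z).
  { apply NNPP. intros Hn. assert (G y z <= G x z).
    { apply G_le. intros l. apply Rnot_lt_le. intros Hl. apply Hn; eauto. }
    pose proof (Rmin_r (G x y) (G y z)). lra. }
  destruct E1 as [l1 H1]. destruct E2 as [l2 H2].
  pose proof (G_ge_chain x (l1 ++ y :: l2) z). rewrite chain_app in H.
  unfold Rmin in H. destruct (Rle_dec _ _); lra.
Qed.

Lemma G_refl x : G x x = d x0 x.
Proof. pose proof (G_ge_gp x x). pose proof (G_le_l x x). unfold gp in H. rewrite drefl in H. lra. Qed.

Lemma G_x0 w : G x0 w = 0.
Proof. pose proof (G_ge_gp x0 w). pose proof (G_le_l x0 w). unfold gp in H. rewrite drefl in *. lra. Qed.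

Lemma G_nn x y : 0 <= G x y.
Proof. pose proof (G_ge_gp x y). pose proof (gpnn x y). lra. Qed.

Lemma dprime_refl x : dprime d x0 x x = 0.
Proof. unfold dprime. rewrite G_refl. ring. Qed.

Lemma G_congr x x' : dprime d x0 x x' = 0 -> forall y, G x y = G x' y.
Proof.
  intros H y. unfold dprime in H.
  pose proof (G_le_l x x'). pose proof (G_le_r x x').
  assert (Hx : G x x' = d x0 x) by lra. assert (Hx' : G x x' = d x0 x') by lra.
  pose proof (G_ultra x' x y). pose proof (G_ultra x x' y).
  rewrite (G_sym x' x) in H2.
  pose proof (G_le_l x y). pose proof (G_le_l x' y).
  unfold Rmin in *. destruct (Rle_dec (G x x') (G x y)); destruct (Rle_dec (G x x') (G x' y)); lra.
Qed.

Lemma G_congr2 x x' : dprime d x0 x x' = 0 -> forall y, G y x = G y x'.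
Proof. intros H y. rewrite (G_sym y x), (G_sym y x'). apply G_congr; auto. Qed.

Lemma rep_spec (P : TX d x0) : proj1_sig P = (fun y => dprime d x0 (TX_rep P) y = 0).
Proof.
  unfold TX_rep. destruct (constructive_indefinite_description _ _) as [x Hx]. simpl. auto.
Qed.

Lemma class_rep (P : TX d x0) : TX_class d x0 (TX_rep P) = P.
Proof.
  pose proof (rep_spec P). destruct P as [Pp Hp]. unfold TX_class.
  apply subset_eq_compat. simpl in H. auto.
Qed.

Lemma rep_class_dp x : dprime d x0 x (TX_rep (TX_class d x0 x)) = 0.
Proof.
  pose proof (rep_spec (TX_class d x0 x)).
  set (x' := TX_rep (TX_class d x0 x)) in *.
  assert (A : proj1_sig (TX_class d x0 x) x') by (rewrite H; simpl; apply dprime_refl).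
  simpl in A. exact A.
Qed.

Lemma rep_x0 : TX_rep (TX_class d x0 x0) = x0.
Proof.
  pose proof (rep_class_dp x0). unfold dprime in H. rewrite G_x0, drefl in H.
  pose proof Hm as [_ [Hz _]]. symmetry. apply Hz. lra.
Qed.

Definition gT (P Q : TX d x0) : R := G (TX_rep P) (TX_rep Q).

Lemma gT_eq (P Q : TX d x0) : gp (@dstar X d x0) (TX_class d x0 x0) P Q = gT P Q.
Proof.
  unfold gp, dstar, gT. rewrite rep_x0. unfold dprime. rewrite !G_x0, drefl. lra.
Qed.

Lemma gT_class x y : gT (TX_class d x0 x) (TX_class d x0 y) = G x y.
Proof.
  unfold gT. rewrite <- (G_congr _ _ (rep_class_dp x)). rewrite <- (G_congr2 _ _ (rep_class_dp y)). auto.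
Qed.

End GP.


Definition convg {Y} (g : Y -> Y -> R) (x : nat -> Y) :=
  forall M, exists N, forall i j, (N <= i)%nat -> (N <= j)%nat -> M <= g (x i) (x j).
Definition eqvg {Y} (g : Y -> Y -> R) (x y : nat -> Y) := ev_big (fun i j => g (x i) (y j)).

Section BndGen.
Variable Y : Type.
Variable dY : Y -> Y -> R.
Variable y0 : Y.
Notation g := (gp dY y0).

Lemma seq_equiv_iff x y : seq_equiv dY y0 x y <-> eqvg g x y.
Proof. unfold seq_equiv, eqvg. apply dli_inf. Qed.

Lemma bnd_wit (p : bnd dY y0) : exists x, convg g x /\
  proj1_sig p = fun y => convg g y /\ eqvg g x y.
Proof.
  destruct p as [P [x [Hx HP]]]. simpl. exists x. split; auto. rewrite HP.
  apply functional_extensionality. intros y. apply propositional_extensionality.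
  rewrite seq_equiv_iff. reflexivity.
Qed.

Lemma bnd_mem_conv (p : bnd dY y0) x : proj1_sig p x -> convg g x.
Proof. destruct (bnd_wit p) as [w [_ Hw]]. rewrite Hw. intros [H _]; auto. Qed.


Lemma bgp_ge (p q : bnd dY y0) x y : proj1_sig p x -> proj1_sig q y ->
  Rbar_le (dliminf (fun i j => g (x i) (y j))) (bgp p q).
Proof. intros Hx Hy. unfold bgp. apply Rbar_lub_ub. exists x, y. auto. Qed.

Lemma bgp_lt (p q : bnd dY y0) (M : R) : Rbar_lt M (bgp p q) ->
  exists x y, proj1_sig p x /\ proj1_sig q y /\
    exists N, forall i j, (N <= i)%nat -> (N <= j)%nat -> M <= g (x i) (y j).
Proof.
  intros H. unfold bgp in H. apply lub_lt in H. destruct H as [t [(x & y & Hx & Hy & ->) Ht]].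
  apply dli_lt in Ht. exists x, y. auto.
Qed.


Lemma eqv_refl x : convg g x -> eqvg g x x.
Proof. unfold eqvg, ev_big, convg. auto. Qed.

Lemma bnd_nonempty (p : bnd dY y0) : exists x, proj1_sig p x.
Proof.
  destruct (bnd_wit p) as [x [Hx Hp]]. exists x. rewrite Hp. split; [auto| apply eqv_refl; auto].
Qed.

Lemma bgp_nn (p q : bnd dY y0) : (forall a b, 0 <= g a b) -> Rbar_le 0 (bgp p q).
Proof.
  intros Hnn. destruct (bnd_nonempty p) as [x Hx]. destruct (bnd_nonempty q) as [y Hy].
  eapply Rbar_le_trans; [| apply (bgp_ge p q x y Hx Hy)]. apply (dli_ge _ 0). auto.
Qed.

Section EqvH.
Hypothesis HeqS : forall x y, eqvg g x y -> eqvg g y x.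
Hypothesis HeqT : forall x y z, eqvg g x y -> eqvg g y z -> eqvg g x z.
Lemma mem_eqv (p : bnd dY y0) x y : proj1_sig p x -> proj1_sig p y -> eqvg g x y.
Proof.
  destruct (bnd_wit p) as [w [Hw Hp]]. rewrite Hp. intros [_ H1] [_ H2].
  eapply HeqT; [apply HeqS; eauto| eauto].
Qed.

Lemma bnd_eq (p q : bnd dY y0) x y : proj1_sig p x -> proj1_sig q y -> eqvg g x y -> p = q.
Proof.
  intros Hx Hy Hxy.
  assert (proj1_sig p = proj1_sig q).
  { destruct (bnd_wit p) as [wp [Hwp Hp]]. destruct (bnd_wit q) as [wq [Hwq Hq]].
    pose proof Hx as Hx'. pose proof Hy as Hy'. rewrite Hp in Hx'. rewrite Hq in Hy'.
    assert (Hpq : eqvg g wp wq).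
    { eapply HeqT; [apply Hx'|]. eapply HeqT; [apply Hxy|]. apply HeqS, Hy'. }
    rewrite Hp, Hq. apply functional_extensionality. intros z. apply propositional_extensionality.
    split; intros [Hz1 Hz2]; split; auto.
    - eapply HeqT; [apply HeqS, Hpq| auto].
    - eapply HeqT; [apply Hpq| auto]. }
  destruct p as [P HP]. destruct q as [Q HQ]. simpl in H. subst Q. f_equal. apply proof_irrelevance.
Qed.


Lemma mem_ext (p : bnd dY y0) x y : proj1_sig p x -> convg g y -> eqvg g x y -> proj1_sig p y.
Proof.
  destruct (bnd_wit p) as [w [Hw Hp]]. rewrite Hp. intros [_ H1] H2 H3. split; auto.
  eapply HeqT; eauto.
Qed.
End EqvH.

Section Hyp.
Hypothesis Hsym : forall a b, g a b = g b a.
Hypothesis Hult : forall a b c, Rmin (g a b) (g b c) <= g a c.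

Lemma ult_ge a b c M : M <= g a b -> M <= g b c -> M <= g a c.
Proof. intros H1 H2. pose proof (Hult a b c). unfold Rmin in H. destruct (Rle_dec _ _); lra. Qed.

Lemma eqv_sym x y : eqvg g x y -> eqvg g y x.
Proof.
  intros H M. destruct (H M) as [N HN]. exists N. intros i j Hi Hj. rewrite Hsym. auto.
Qed.

Lemma eqv_trans x y z : eqvg g x y -> eqvg g y z -> eqvg g x z.
Proof.
  intros H1 H2 M. destruct (H1 M) as [N1 HN1]. destruct (H2 M) as [N2 HN2].
  exists (max N1 N2). intros i j Hi Hj. apply (ult_ge _ (y (max N1 N2))).
  - apply HN1; lia.
  - apply HN2; lia.
Qed.

Lemma bgp_sym_le (p q : bnd dY y0) : Rbar_le (bgp p q) (bgp q p).
Proof.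
  apply rbar_le_lt. intros M HM. destruct (bgp_lt p q M HM) as (x & y & Hx & Hy & N & HN).
  eapply Rbar_le_trans; [| apply (bgp_ge q p y x Hy Hx)]. apply (dli_ge _ N).
  intros i j Hi Hj. rewrite Hsym. auto.
Qed.

Lemma bgp_sym (p q : bnd dY y0) : bgp p q = bgp q p.
Proof. apply Rbar_le_antisym; apply bgp_sym_le. Qed.

Lemma bgp_self (p : bnd dY y0) : bgp p p = p_infty.
Proof.
  destruct (bnd_nonempty p) as [x Hx]. pose proof (bgp_ge p p x x Hx Hx).
  assert (dliminf (fun i j => g (x i) (x j)) = p_infty).
  { apply dli_inf. apply (bnd_mem_conv p x Hx). }
  rewrite H0 in H. destruct (bgp p p); simpl in H; tauto.
Qed.

Lemma bgp_inf_eq (p q : bnd dY y0) : bgp p q = p_infty -> p = q.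
Proof.
  intros H. destruct (bnd_nonempty p) as [x Hx]. destruct (bnd_nonempty q) as [y Hy].
  apply (bnd_eq eqv_sym eqv_trans p q x y Hx Hy). intros M.
  assert (Rbar_lt M (bgp p q)) by (rewrite H; simpl; auto).
  destruct (bgp_lt p q M H0) as (x' & y' & Hx' & Hy' & N0 & HN0).
  destruct (mem_eqv eqv_sym eqv_trans p x x' Hx Hx' M) as [N1 HN1].
  destruct (mem_eqv eqv_sym eqv_trans q y' y Hy' Hy M) as [N2 HN2].
  set (k := max N0 (max N1 N2)).
  exists k. intros i j Hi Hj.
  apply (ult_ge _ (x' k)); [apply HN1; lia|].
  apply (ult_ge _ (y' k)); [apply HN0; lia| apply HN2; lia].
Qed.

Lemma Rbar_min_lt (a b : Rbar) (M : R) : Rbar_lt M (Rbar_min a b) -> Rbar_lt M a /\ Rbar_lt M b.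
Proof.
  intros H. split; eapply Rbar_lt_le_trans; eauto; [apply Rbar_min_l| apply Rbar_min_r].
Qed.

Lemma bgp_ultra (p q r : bnd dY y0) : Rbar_le (Rbar_min (bgp p q) (bgp q r)) (bgp p r).
Proof.
  apply rbar_le_lt. intros M HM. apply Rbar_min_lt in HM. destruct HM as [H1 H2].
  destruct (bgp_lt p q M H1) as (x & y & Hx & Hy & N1 & HN1).
  destruct (bgp_lt q r M H2) as (y' & z & Hy' & Hz & N2 & HN2).
  destruct (mem_eqv eqv_sym eqv_trans q y y' Hy Hy' M) as [N3 HN3].
  set (k := max N1 (max N2 N3)).
  eapply Rbar_le_trans; [| apply (bgp_ge p r x z Hx Hz)]. apply (dli_ge _ k).
  intros i j Hi Hj.
  apply (ult_ge _ (y k)); [apply HN1; lia|].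
  apply (ult_ge _ (y' k)); [apply HN3; lia| apply HN2; lia].
Qed.

End Hyp.
End BndGen.


Lemma ev_shift (u v : nat -> nat -> R) D : ev_big u -> (forall i j, u i j <= v i j + D) -> ev_big v.
Proof.
  intros H Hle M. destruct (H (M + D)) as [N HN]. exists N. intros i j Hi Hj.
  specialize (HN i j Hi Hj). specialize (Hle i j). lra.
Qed.

Lemma Rpower_pos a x : 0 < Rpower a x.
Proof. unfold Rpower. apply exp_pos. Qed.

Lemma vis_nn a t : 0 <= vis a t.
Proof. destruct t; simpl; try lra. left; apply Rpower_pos. Qed.

Lemma vis_zero a t : Rbar_le 0 t -> vis a t = 0 -> t = p_infty.
Proof.
  intros H0 H. destruct t as [r| |]; simpl in *; auto.
  - pose proof (Rpower_pos a (- r)). lra.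
  - contradiction.
Qed.

Lemma vis_anti a s t : 1 < a -> Rbar_le 0 s -> Rbar_le s t -> vis a t <= vis a s.
Proof.
  intros Ha H0 H. destruct s as [r| |]; destruct t as [u| |]; simpl in *; try contradiction; try lra.
  - apply Rle_Rpower; lra.
  - left; apply Rpower_pos.
Qed.

Lemma vis_bounds a D bX bT : 1 < a -> 0 <= D -> Rbar_le 0 bX -> Rbar_le bX bT ->
  (forall M : R, Rbar_lt M bT -> Rbar_le (M - D) bX) ->
  / Rpower a D * vis a bX <= vis a bT /\ vis a bT <= Rpower a D * vis a bX.
Proof.
  intros Ha HD H0 H1 H2.
  assert (HK : 1 <= Rpower a D).
  { rewrite <- (Rpower_O a) by lra. apply Rle_Rpower; lra. }
  assert (Hup : vis a bT <= Rpower a D * vis a bX).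
  { pose proof (vis_anti a bX bT Ha H0 H1). pose proof (vis_nn a bX). nra. }
  split; auto.
  destruct bX as [r| |]; destruct bT as [s| |]; simpl in *; try contradiction; try lra.
  - assert (s - D <= r).
    { apply Rnot_lt_le. intros Hlt. specialize (H2 ((s + r + D) / 2)). simpl in H2.
      assert ((s + r + D) / 2 - D <= r) by (apply H2; lra). lra. }
    rewrite <- Rpower_Ropp. rewrite <- Rpower_plus. apply Rle_Rpower; lra.
  - exfalso. specialize (H2 (r + D + 1) I). simpl in H2. lra.
Qed.

Theorem corollary6p36 (X : Type) (d : X -> X -> R) (x0 : X)
    (Hqt : quasi_tree d) (a : R) (Ha : 1 < a) :
  exists dB : bnd d x0 -> bnd d x0 -> R,
    visual_metric a dB /\
    exists f : bnd d x0 -> bnd (@dstar X d x0) (TX_class d x0 x0),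
      (forall p1 p2, f p1 = f p2 -> p1 = p2) /\
      (forall q, exists p, f p = q) /\
      (forall p1 p2, @dbTX X d x0 a (f p1) (f p2) = dB p1 p2).
Proof.
  destruct Hqt as [Hm [Hgeo [V [E [HT [fq [K [C [HK [HC [HQI _]]]]]]]]]]].
  set (D := 3 * Delta K C).
  assert (HD : 0 <= D) by (unfold D; pose proof (Delta_nn K C HK HC); lra).
  set (gX := gp d x0).
  set (gTT := gp (@dstar X d x0) (TX_class d x0 x0)).
  set (phi := TX_class d x0).
  assert (HgT : forall P Q, gTT P Q = gp' d x0 (TX_rep P) (TX_rep Q)).
  { intros. unfold gTT. rewrite (gT_eq X d Hm x0). reflexivity. }
  assert (Hphi : forall a b, gTT (phi a) (phi b) = gp' d x0 a b).
  { intros. unfold gTT. rewrite (gT_eq X d Hm x0). apply gT_class; auto. }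
  assert (Hlo : forall a b, gX a b <= gTT (phi a) (phi b)).
  { intros. rewrite Hphi. apply G_ge_gp; auto. }
  assert (Hhi : forall a b, gTT (phi a) (phi b) <= gX a b + D).
  { intros. rewrite Hphi. apply G_le; auto. intros l. apply (chain_bound X d Hm V E HT fq K C HK HC HQI Hgeo). }
  assert (Hpp : forall P, phi (TX_rep P) = P) by (intros; apply class_rep).
  assert (Hhi' : forall b P, gTT (phi b) P <= gX b (TX_rep P) + D).
  { intros. pose proof (Hhi b (TX_rep P)). rewrite Hpp in H. auto. }
  assert (Hhi2 : forall P Q, gTT P Q <= gX (TX_rep P) (TX_rep Q) + D).
  { intros. pose proof (Hhi (TX_rep P) (TX_rep Q)). rewrite !Hpp in H. auto. }
  assert (HTsym : forall P Q, gTT P Q = gTT Q P) by (intros; rewrite !HgT; apply G_sym; auto).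
  assert (HTult : forall P Q R, Rmin (gTT P Q) (gTT Q R) <= gTT P R) by (intros; rewrite !HgT; apply G_ultra; auto).
  assert (HTnn : forall P Q, 0 <= gTT P Q) by (intros; rewrite HgT; apply G_nn; auto).
  assert (HXsym : forall a b, gX a b = gX b a) by (intros; apply gps; auto).
  assert (HXnn : forall a b, 0 <= gX a b) by (intros; apply gpnn; auto).
  assert (TconvXT : forall x, convg gX x -> convg gTT (fun n => phi (x n))).
  { intros x H M. destruct (H M) as [N HN]. exists N. intros i j Hi Hj.
    pose proof (HN i j Hi Hj). pose proof (Hlo (x i) (x j)). simpl. lra. }
  assert (TconvTX : forall u, convg gTT u -> convg gX (fun n => TX_rep (u n))).
  { intros u H. apply (ev_shift _ _ D H). intros i j. apply Hhi2. }
  assert (EXT : forall x y, eqvg gX x y -> eqvg gTT (fun n => phi (x n)) (fun n => phi (y n))).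
  { intros x y H. apply (ev_shift _ _ 0 H). intros i j. rewrite Rplus_0_r. apply Hlo. }
  assert (ETX : forall x y, eqvg gTT (fun n => phi (x n)) (fun n => phi (y n)) -> eqvg gX x y).
  { intros x y H. apply (ev_shift _ _ D H). intros i j. apply Hhi. }
  assert (HTS : forall u v, eqvg gTT u v -> eqvg gTT v u) by (apply eqv_sym; auto).
  assert (HTT : forall u v w, eqvg gTT u v -> eqvg gTT v w -> eqvg gTT u w) by (apply eqv_trans; auto).
  assert (HXS : forall x y, eqvg gX x y -> eqvg gX y x) by (apply eqv_sym; auto).
  assert (HXT : forall x y z, eqvg gX x y -> eqvg gX y z -> eqvg gX x z).
  { intros x y z H1 H2. apply ETX. eapply HTT; apply EXT; eauto. }
  assert (exT : forall p : bnd d x0, exists P : bnd (@dstar X d x0) (TX_class d x0 x0),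
             forall x, proj1_sig p x -> proj1_sig P (fun n => phi (x n))).
  { intros p. destruct (bnd_nonempty X d x0 p) as [w Hw].
    pose proof (bnd_mem_conv X d x0 p w Hw) as Hwc.
    exists (exist _ (fun v => conv_inf (@dstar X d x0) (TX_class d x0 x0) v /\
              seq_equiv (@dstar X d x0) (TX_class d x0 x0) (fun n => phi (w n)) v)
             (ex_intro _ (fun n => phi (w n)) (conj (TconvXT w Hwc) eq_refl))).
    intros x Hx. simpl. split.
    - apply TconvXT. apply (bnd_mem_conv X d x0 p x Hx).
    - apply seq_equiv_iff. apply EXT. apply (mem_eqv X d x0 HXS HXT p w x Hw Hx). }
  set (f := fun p => proj1_sig (constructive_indefinite_description _ (exT p))).
  assert (Hf : forall p x, proj1_sig p x -> proj1_sig (f p) (fun n => phi (x n))).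
  { intros p. unfold f. destruct (constructive_indefinite_description _ _) as [P HP]. simpl. auto. }
  assert (Hinj : forall p1 p2, f p1 = f p2 -> p1 = p2).
  { intros p1 p2 Heq. destruct (bnd_nonempty X d x0 p1) as [x1 H1]. destruct (bnd_nonempty X d x0 p2) as [x2 H2].
    pose proof (Hf p1 x1 H1) as F1. pose proof (Hf p2 x2 H2) as F2. rewrite Heq in F1.
    apply (bnd_eq X d x0 HXS HXT p1 p2 x1 x2 H1 H2). apply ETX.
    apply (mem_eqv _ _ _ HTS HTT (f p2) _ _ F1 F2). }
  set (bT := fun p q => @bgp (TX d x0) (@dstar X d x0) (TX_class d x0 x0) (f p) (f q)).
  exists (fun p q => @dbTX X d x0 a (f p) (f q)).
  split.
  - split.
    +
      split; [intros; apply vis_nn|].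
      split; [|split].
      * intros p q. split.
        -- intros H. apply Hinj. apply (bgp_inf_eq _ _ _ HTsym HTult).
           apply (vis_zero a); auto. apply bgp_nn. auto.
        -- intros ->. unfold dbTX. rewrite bgp_self. reflexivity.
      * intros p q. unfold dbTX. rewrite (bgp_sym _ _ _ HTsym). reflexivity.
      * intros p q r. unfold dbTX.
        pose proof (bgp_ultra _ _ _ HTsym HTult (f p) (f q) (f r)) as HU.
        set (A := bgp (f p) (f q)) in *. set (B := bgp (f q) (f r)) in *.
        assert (HA : Rbar_le 0 A) by (apply bgp_nn; auto).
        assert (HB : Rbar_le 0 B) by (apply bgp_nn; auto).
        assert (HAB : Rbar_le 0 (Rbar_min A B)) by (apply Rbar_min_case; auto).
        pose proof (vis_anti a _ _ Ha HAB HU).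
        pose proof (vis_nn a A). pose proof (vis_nn a B).
        assert (vis a (Rbar_min A B) <= vis a A + vis a B) by (apply (Rbar_min_case A B (fun m => vis a m <= vis a A + vis a B)); lra).
        lra.
    + exists (Rpower a D). split.
      { rewrite <- (Rpower_O a) by lra. apply Rle_Rpower; lra. }
      intros p q. unfold dbTX. apply vis_bounds; auto.
      * apply bgp_nn. auto.
      * apply rbar_le_lt. intros M HM. destruct (bgp_lt _ _ _ p q M HM) as (x & y & Hx & Hy & N & HN).
        eapply Rbar_le_trans; [| apply (bgp_ge _ _ _ (f p) (f q) _ _ (Hf p x Hx) (Hf q y Hy))].
        apply (dli_ge _ N). intros i j Hi Hj. pose proof (HN i j Hi Hj). pose proof (Hlo (x i) (y j)). unfold gX, gTT in *. lra.
      * intros M HM. destruct (bgp_lt _ _ _ (f p) (f q) M HM) as (u & v & Hu & Hv & N & HN).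
        assert (Hrep : forall (p : bnd d x0) u, proj1_sig (f p) u -> proj1_sig p (fun n => TX_rep (u n))).
        { intros p0 u0 Hu0. destruct (bnd_nonempty X d x0 p0) as [x Hx].
          apply (mem_ext X d x0 HXT p0 x); auto.
          - apply TconvTX. apply (bnd_mem_conv _ _ _ (f p0) u0 Hu0).
          - pose proof (mem_eqv _ _ _ HTS HTT (f p0) _ _ (Hf p0 x Hx) Hu0) as He.
            apply (ev_shift _ _ D He). intros i j. apply Hhi'. }
        eapply Rbar_le_trans; [| apply (bgp_ge _ _ _ p q _ _ (Hrep p u Hu) (Hrep q v Hv))].
        apply (dli_ge _ N). intros i j Hi Hj. pose proof (HN i j Hi Hj). pose proof (Hhi2 (u i) (v j)). unfold gX, gTT in *. lra.
  - exists f. split; [auto| split; [| intros; reflexivity]].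
    intros Q. destruct (bnd_nonempty _ _ _ Q) as [u Hu].
    pose proof (bnd_mem_conv _ _ _ Q u Hu) as uc.
    pose proof (TconvTX u uc) as xc.
    set (p := exist (fun P => exists x, conv_inf d x0 x /\ P = (fun y => conv_inf d x0 y /\ seq_equiv d x0 x y))
                 (fun y => conv_inf d x0 y /\ seq_equiv d x0 (fun n => TX_rep (u n)) y)
                 (ex_intro _ (fun n => TX_rep (u n)) (conj xc eq_refl)) : bnd d x0).
    exists p.
    assert (Hin : proj1_sig p (fun n => TX_rep (u n))).
    { simpl. split; auto. apply seq_equiv_iff. apply eqv_refl. auto. }
    pose proof (Hf p _ Hin) as Hfp.
    assert (Eu : (fun n => phi (TX_rep (u n))) = u) by (apply functional_extensionality; intros; apply Hpp).
    cbv beta in Hfp. rewrite Eu in Hfp.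
    apply (bnd_eq _ _ _ HTS HTT (f p) Q u u Hfp Hu). apply eqv_refl. auto.
Qed.
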